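(* For every PTM $M$, the probabilistic function $CF_M:\mathbb{N}\to\mathcal D(\mathbb{N})$ defined by $CF_M(x)(y)=PT_M(x,y)=2^{-|\overline y|}$ if $y$ is a leaf of $CT_M(x)$ and $CF_M(x)(y)=0$ otherwise, satisfies $CF_M=\mu(PTC_M)$; in particular $CF_M\in\mathscr{PR}$.
   Context: PTM: Turing machine with two transition functions $\delta_0,\delta_1$ (each applied with probability $1/2$) defined on non-final configurations; initial configuration on input string $w=a\cdot v$ is $\langle\varepsilon,a,v,q_s\rangle$; final configurations are $\langle s,a,\varepsilon,q\rangle$ with $q$ final. $n\mapsto\overline n$ is the length-lexicographic bijection $\mathbb{N}\to\{0,1\}^*$ ($\overline0=\varepsilon,\overline1=0,\overline2=1,\overline3=00,\dots$). Computation tree $CT_M(x)$: nodes are binary strings, root $\varepsilon$ labelled by the initial configuration on $\overline x$, a node $b$ labelled by a non-final $C$ has children $b0,b1$ labelled $\delta_0(C),\delta_1(C)$, nodes labelled by final configurations have no children; $y\in\mathbb{N}$ denotes node $\overline y$, a leaf if it is in the tree with final label. $PT_M(x,y)=2^{-|\overline y|}$. Recursively in $y$: if $y$ is not a leaf, $PT^1_M(x,y)=1$, $PT^0_M(x,y)=0$; otherwise $PT^0_M(x,y)=PT_M(x,y)/\prod_{k<y}PT^1_M(x,k)$ and $PT^1_M(x,y)=1-PT^0_M(x,y)$. $PTC_M(x,y)(0)=PT^0_M(x,y)$, $PTC_M(x,y)(1)=PT^1_M(x,y)$, $PTC_M(x,y)(z)=0$ for $z\ge2$. Minimization: $\mu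 f(\vec x)(y)=f(\vec x,y)(0)\prod_{z<y}\sum_{k>0}f(\vec x,z)(k)$. $\mathcal D(X)$: functions $X\to[0,1]$ with sum $\le1$. $\mathscr{PR}$ is the smallest class of functions $\mathbb{N}^k\to\mathcal D(\mathbb{N})$ containing $z(n)(0)=1$, $s(n)(n+1)=1$, $\Pi^n_m(\vec k)(k_m)=1$, $r(x)(x)=r(x)(x+1)=1/2$ (other values $0$) and closed under generalized composition $(f\odot(g_1,\dots,g_n))(\vec x)(y)=\sum_{\vec z} f(\vec z)(y)\prod_i g_i(\vec x)(z_i)$, primitive recursion ($h(\vec x,0)=f(\vec x)$, $h(\vec x,y+1)(w)=\sum_z h(\vec x,y)(z)g(\vec x,y,z)(w)$) and minimization. *)

(* Defs.v *)
From Stdlib Require Import Reals List Arith PArith FinFun.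
Import ListNotations.
Open Scope R_scope.

Fixpoint fsum (N : nat) (F : nat -> R) : R :=
  match N with O => 0 | S n => fsum n F + F n end.

Fixpoint fprod (N : nat) (F : nat -> R) : R :=
  match N with O => 1 | S n => fprod n F * F n end.

Definition lsumR (l : list R) : R := fold_right Rplus 0 l.

(* SumN F s : s = sum_{i in N} F i  (F nonnegative: sup of partial sums) *)
Definition SumN (F : nat -> R) (s : R) : Prop :=
  is_lub (fun r => exists N, r = fsum N F) s.

Fixpoint boxes (n N : nat) : list (list nat) :=
  match n with
  | O => [[]]
  | S m => flat_map (fun i => map (cons i) (boxes m N)) (seq 0 N)
  end.

Definition SumVec (n : nat) (F : list nat -> R) (s : R) : Prop :=
  is_lub (fun r => exists N, r = lsumR (map F (boxes n N))) s.

(* Probabilistic functions N^k -> D(N), represented as                 *)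
(* list nat -> nat -> R (only arguments of length k matter).           *)

Definition pfun := list nat -> nat -> R.

Definition prodcomp (gs : list pfun) (x z : list nat) : R :=
  fold_right Rmult 1 (map (fun p => (fst p) x (snd p)) (combine gs z)).

Definition IsMu (k : nat) (f h : pfun) : Prop :=
  forall x, length x = k -> forall y,
    exists s : nat -> R,
      (forall z, SumN (fun j => f (x ++ [z]) (S j)) (s z)) /\
      h x y = f (x ++ [y]) 0%nat * fprod y s.

Inductive PR : nat -> pfun -> Prop :=
| PR_zero : forall h : pfun,
    (forall n y, h [n] y = if Nat.eqb y 0 then 1 else 0) -> PR 1 h
| PR_succ : forall h : pfun,
    (forall n y, h [n] y = if Nat.eqb y (S n) then 1 else 0) -> PR 1 h
| PR_proj : forall (n m : nat) (h : pfun), (m < n)%nat ->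
    (forall x, length x = n -> forall y,
        h x y = if Nat.eqb y (nth m x 0%nat) then 1 else 0) -> PR n h
| PR_rand : forall h : pfun,
    (forall n y, h [n] y =
        if Nat.eqb y n then / 2 else if Nat.eqb y (S n) then / 2 else 0) ->
    PR 1 h
| PR_comp : forall (k n : nat) (f : pfun) (gs : list pfun) (h : pfun),
    PR n f -> length gs = n -> (forall g, In g gs -> PR k g) ->
    (forall x, length x = k -> forall y,
        SumVec n (fun z => f z y * prodcomp gs x z) (h x y)) ->
    PR k h
| PR_rec : forall (k : nat) (f g h : pfun),
    PR k f -> PR (S (S k)) g ->
    (forall x, length x = k -> forall w, h (x ++ [0%nat]) w = f x w) ->
    (forall x, length x = k -> forall y w,
        SumN (fun z => h (x ++ [y]) z * g (x ++ [y; z]) w) (h (x ++ [S y]) w)) ->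
    PR (S k) h
| PR_mu : forall (k : nat) (f h : pfun),
    PR (S k) f -> IsMu k f h -> PR k h.

Inductive move := mL | mS | mR.

Record PTM := mkPTM {
  Q : Type;
  Sigma : Type;
  Q_fin : Finite Q;
  Sigma_fin : Finite Sigma;
  blank : Sigma;
  sym0 : Sigma;
  sym1 : Sigma;
  syms_distinct : blank <> sym0 /\ blank <> sym1 /\ sym0 <> sym1;
  qs : Q;
  final : Q -> bool;
  delta0 : Q -> Sigma -> Q * Sigma * move;
  delta1 : Q -> Sigma -> Q * Sigma * move
}.

(* configuration <s, a, v, q>; the left string s is stored REVERSED
   (its head is the cell immediately left of the tape head) *)
Record config (M : PTM) := mkConf {
  cleft : list (Sigma M);
  ccur : Sigma M;
  cright : list (Sigma M);
  cstate : Q M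
}.
Arguments mkConf {M}.
Arguments cleft {M}. Arguments ccur {M}. Arguments cright {M}. Arguments cstate {M}.

Definition isFinal {M : PTM} (C : config M) : bool :=
  final M (cstate C) && match cright C with nil => true | _ => false end.

Definition step {M : PTM} (b : bool) (C : config M) : config M :=
  let '(q', a', m) := (if b then delta1 M else delta0 M) (cstate C) (ccur C) in
  match m with
  | mS => mkConf (cleft C) a' (cright C) q'
  | mL => match cleft C with
          | nil => mkConf nil (blank M) (a' :: cright C) q'
          | c :: l => mkConf l c (a' :: cright C) q'
          end
  | mR => match cright C with
          | nil => mkConf (a' :: cleft C) (blank M) nil q'
          | c :: r => mkConf (a' :: cleft C) c r q'
          end
  end.

(* length-lexicographic bijection n |-> bar n : N -> {0,1}^*
   (false = 0, true = 1): bar n = binary digits of n+1 without leading 1 *)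
Fixpoint pbits (p : positive) : list bool :=
  match p with
  | xH => []
  | xO p' => pbits p' ++ [false]
  | xI p' => pbits p' ++ [true]
  end.
Definition bar (n : nat) : list bool := pbits (Pos.of_succ_nat n).

Definition bit2sym (M : PTM) (b : bool) : Sigma M :=
  if b then sym1 M else sym0 M.

Definition initConf (M : PTM) (w : list bool) : config M :=
  match map (bit2sym M) w with
  | nil => mkConf nil (blank M) nil (qs M)
  | a :: v => mkConf nil a v (qs M)
  end.

(* label of node b in CT_M(x), if b is a node of the tree *)
Fixpoint run {M : PTM} (C : config M) (b : list bool) : option (config M) :=
  match b with
  | nil => Some C
  | c :: b' => if isFinal C then None else run (step c C) b'
  end.

Definition label (M : PTM) (x : nat) (b : list bool) : option (config M) :=
  run (initConf M (bar x)) b.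

Definition isLeaf (M : PTM) (x y : nat) : bool :=
  match label M x (bar y) with
  | Some C => isFinal C
  | None => false
  end.

Definition PT (M : PTM) (x y : nat) : R := / (2 ^ length (bar y)).

Definition PT0_from (M : PTM) (x y : nat) (P : R) : R :=
  if isLeaf M x y then PT M x y / P else 0.
Definition PT1_from (M : PTM) (x y : nat) (P : R) : R :=
  if isLeaf M x y then 1 - PT M x y / P else 1.

(* P1prod M x n = prod_{k<n} PT^1_M(x,k) *)
Fixpoint P1prod (M : PTM) (x n : nat) : R :=
  match n with
  | O => 1
  | S n' => P1prod M x n' * PT1_from M x n' (P1prod M x n')
  end.

Definition PT0 (M : PTM) (x y : nat) : R := PT0_from M x y (P1prod M x y).
Definition PT1 (M : PTM) (x y : nat) : R := PT1_from M x y (P1prod M x y).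

Definition PTC (M : PTM) : pfun := fun args z =>
  let x := nth 0 args 0%nat in
  let y := nth 1 args 0%nat in
  match z with
  | O => PT0 M x y
  | 1%nat => PT1 M x y
  | _ => 0
  end.

Definition CF (M : PTM) : pfun := fun args y =>
  let x := nth 0 args 0%nat in
  if isLeaf M x y then PT M x y else 0.

(* Main.v *)
Require Import Defs.
From Stdlib Require Import Reals List.
From Stdlib Require Import Arith Lia Lra PArith FinFun ClassicalEpsilon FunctionalExtensionality PropExtensionality.
Import ListNotations.


Open Scope R_scope.

Lemma PR_ext k h h' : PR k h -> (forall x, length x = k -> forall y, h x y = h' x y) -> PR k h'.
Proof.
  intros HP Heq. destruct HP.
  - apply PR_zero; intros; rewrite <- Heq by reflexivity; auto.
  - apply PR_succ; intros; rewrite <- Heq by reflexivity; auto.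
  - eapply PR_proj; eauto; intros; rewrite <- Heq by auto; auto.
  - apply PR_rand; intros; rewrite <- Heq by reflexivity; auto.
  - eapply PR_comp; eauto; intros; rewrite <- Heq by auto; auto.
  - eapply PR_rec; eauto.
    + intros; rewrite <- Heq by (rewrite length_app; simpl; lia); auto.
    + intros x Hx y w.
      rewrite <- Heq by (rewrite length_app; simpl; lia).
      replace (fun z => h' (x ++ [y]) z * g (x ++ [y; z]) w) with
        (fun z => h (x ++ [y]) z * g (x ++ [y; z]) w); auto.
      apply functional_extensionality; intros z.
      rewrite Heq by (rewrite length_app; simpl; lia); auto.
  - eapply PR_mu; eauto. match goal with H0 : IsMu _ _ _ |- _ => rename H0 into HM end. intros x Hx y. destruct (HM x Hx y) as [s [Hs Hh]].
    exists s; split; auto. rewrite <- Heq; auto.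
Qed.

Lemma fsum_point (F : nat -> R) j0 N :
  (forall j, j <> j0 -> F j = 0) ->
  fsum N F = if (j0 <? N)%nat then F j0 else 0.
Proof.
  intros H. induction N; simpl; auto.
  rewrite IHN. destruct (Nat.eq_dec N j0).
  - subst. destruct (j0 <? j0)%nat eqn:E1; destruct (j0 <? S j0)%nat eqn:E2;
      rewrite ?Nat.ltb_lt, ?Nat.ltb_ge in *; try lia; lra.
  - rewrite (H N n). destruct (j0 <? N)%nat eqn:E1; destruct (j0 <? S N)%nat eqn:E2;
      rewrite ?Nat.ltb_lt, ?Nat.ltb_ge in *; try lia; lra.
Qed.

Lemma lub_approx (a : nat -> R) L :
  (forall N, a N <= L) -> (forall eps, eps > 0 -> exists N, L - eps < a N) ->
  is_lub (fun r => exists N, r = a N) L.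
Proof.
  intros H1 H2. split.
  - intros r [N ->]. auto.
  - intros u Hu. destruct (Rle_or_lt L u) as [|Hlt]; auto.
    destruct (H2 (L - u)) as [N HN]; [lra|].
    assert (a N <= u) by (apply Hu; eauto). lra.
Qed.

Lemma lub_eventually (a : nat -> R) v N0 :
  0 <= v -> (forall N, a N = 0 \/ a N = v) -> a N0 = v ->
  is_lub (fun r => exists N, r = a N) v.
Proof.
  intros Hv H H0. apply lub_approx.
  - intros N. destruct (H N) as [->| ->]; lra.
  - intros eps He. exists N0. lra.
Qed.

Lemma SumN_point (F : nat -> R) j0 :
  (forall j, j <> j0 -> F j = 0) -> 0 <= F j0 -> SumN F (F j0).
Proof.
  intros H Hp. unfold SumN. apply (lub_eventually _ _ (S j0)); auto.
  - intros N. rewrite (fsum_point F j0 N H). destruct (j0 <? N)%nat; auto.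
  - rewrite (fsum_point F j0 _ H). rewrite (proj2 (Nat.ltb_lt _ _)) by lia. auto.
Qed.

Definition delta (F : list nat -> nat) : pfun := fun l y => if Nat.eqb y (F l) then 1 else 0.
Definition DPR k F := PR k (delta F).

Lemma delta_nonneg F l y : 0 <= delta F l y.
Proof. unfold delta; destruct (Nat.eqb y (F l)); lra. Qed.

Lemma DPR_ext k F F' : DPR k F -> (forall x, length x = k -> F x = F' x) -> DPR k F'.
Proof.
  intros H E. eapply PR_ext; eauto. intros x Hx y. unfold delta. rewrite E; auto.
Qed.

Notation "l @ i" := (nth i l 0%nat) (at level 1, format "l @ i").

Lemma DPR_zero1 : DPR 1 (fun _ => 0%nat).
Proof. apply PR_zero. intros. reflexivity. Qed.
Lemma DPR_succ1 : DPR 1 (fun l => S (l@0)).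
Proof. apply PR_succ. intros. reflexivity. Qed.
Lemma DPR_proj k i : (i < k)%nat -> DPR k (fun l => l@i).
Proof. intros. eapply PR_proj; eauto. Qed.

Lemma lsumR_app l1 l2 : lsumR (l1 ++ l2) = lsumR l1 + lsumR l2.
Proof. induction l1; simpl; auto. lra. unfold lsumR in *. simpl. rewrite IHl1. lra. Qed.

Lemma lsumR_boxes_S (F : list nat -> R) n N :
  lsumR (map F (boxes (S n) N)) = fsum N (fun i => lsumR (map (fun z => F (i :: z)) (boxes n N))).
Proof.
  simpl. generalize (boxes n N) as L. intros L. induction N; [reflexivity|].
  rewrite seq_S. rewrite flat_map_app, map_app, lsumR_app, IHN. simpl fsum. simpl flat_map.
  rewrite app_nil_r, map_map. auto.
Qed.

Fixpoint leql (a b : list nat) : bool :=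
  match a, b with
  | [], [] => true
  | x :: a', y :: b' => Nat.eqb x y && leql a' b'
  | _, _ => false
  end.

Lemma leql_eq a b : leql a b = true -> a = b.
Proof.
  revert b; induction a; destruct b; simpl; intros; try discriminate; auto.
  apply Bool.andb_true_iff in H as [H1 H2]. apply Nat.eqb_eq in H1. subst. f_equal; auto.
Qed.

Lemma boxes_sum_point n (hv : list nat) c N : length hv = n ->
  lsumR (map (fun z => if leql z hv then c else 0) (boxes n N)) =
  if forallb (fun h => Nat.ltb h N) hv then c else 0.
Proof.
  revert hv. induction n; intros hv Hl.
  - destruct hv; [|discriminate]. simpl. unfold lsumR; simpl. lra.
  - destruct hv as [|h hv]; [discriminate|]. simpl in Hl.
    rewrite lsumR_boxes_S.
    rewrite (fsum_point _ h).
    + simpl. rewrite Nat.eqb_refl. simpl. rewrite IHn by lia.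
      destruct (h <? N)%nat; simpl; auto.
    + intros j Hj. simpl. rewrite (proj2 (Nat.eqb_neq j h) Hj). simpl.
      clear. induction (boxes n N); unfold lsumR in *; simpl; auto. rewrite IHl. lra.
Qed.

Lemma prodcomp_delta Hs x z : length z = length Hs ->
  prodcomp (map delta Hs) x z = if leql z (map (fun H => H x) Hs) then 1 else 0.
Proof.
  revert z; induction Hs; intros z Hz; destruct z; simpl in *; try discriminate.
  - reflexivity.
  - unfold prodcomp in *. simpl. rewrite IHHs by lia. unfold delta.
    destruct (Nat.eqb n (a x)); simpl; lra.
Qed.

Lemma In_boxes_length n N z : In z (boxes n N) -> length z = n.
Proof.
  revert z; induction n; simpl; intros z Hz.
  - destruct Hz as [<-|[]]; auto.
  - apply in_flat_map in Hz as [i [_ Hi]]. apply in_map_iff in Hi as [z' [<- Hz']].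
    simpl; f_equal; auto.
Qed.

Lemma forallb_lt_big (hv : list nat) : exists N, forall N', (N <= N')%nat -> forallb (fun h => Nat.ltb h N') hv = true.
Proof.
  induction hv. exists 0%nat; auto.
  destruct IHhv as [N HN]. exists (Nat.max N (S a)). intros N' HN'. simpl.
  rewrite HN by lia. rewrite (proj2 (Nat.ltb_lt _ _)) by lia. auto.
Qed.

Lemma PR_comp_det k n f Hs : PR n f -> (forall z y, 0 <= f z y) ->
  (forall H, In H Hs -> DPR k H) -> length Hs = n ->
  PR k (fun x y => f (map (fun H => H x) Hs) y).
Proof.
  intros Hf Hpos HH Hl. apply (PR_comp k n f (map delta Hs)); auto.
  - rewrite length_map; auto.
  - intros g Hg. apply in_map_iff in Hg as [H [<- HH']]. apply HH; auto.
  - intros x Hx y. unfold SumVec.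
    set (hv := map (fun H => H x) Hs).
    assert (E : forall N, lsumR (map (fun z => f z y * prodcomp (map delta Hs) x z) (boxes n N))
       = if forallb (fun h => Nat.ltb h N) hv then f hv y else 0).
    { intros N. rewrite <- (boxes_sum_point n) by (unfold hv; rewrite length_map; auto).
      f_equal. apply map_ext_in. intros z Hz. apply In_boxes_length in Hz.
      rewrite prodcomp_delta by lia. fold hv.
      destruct (leql z hv) eqn:E; [apply leql_eq in E; subst|]; lra. }
    destruct (forallb_lt_big hv) as [N0 HN0].
    apply (lub_eventually _ _ N0); auto.
    + intros N; rewrite E. destruct (forallb _ hv); auto.
    + rewrite E, HN0; auto.
Qed.

Lemma DPR_comp k n G Hs : DPR n G -> (forall H, In H Hs -> DPR k H) -> length Hs = n ->
  DPR k (fun x => G (map (fun H => H x) Hs)).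
Proof.
  intros. unfold DPR. eapply PR_ext. apply (PR_comp_det k n (delta G) Hs); auto.
  - intros; apply delta_nonneg.
  - intros; reflexivity.
Qed.

Lemma DPR_rec k F G H : DPR k F -> DPR (S (S k)) G ->
  (forall x, length x = k -> H (x ++ [0%nat]) = F x) ->
  (forall x y, length x = k -> H (x ++ [S y]) = G (x ++ [y; H (x ++ [y])])) ->
  DPR (S k) H.
Proof.
  intros HF HG E0 ES. apply (PR_rec k (delta F) (delta G) (delta H)); auto.
  - intros x Hx w. unfold delta. rewrite E0; auto.
  - intros x Hx y w.
    set (z0 := H (x ++ [y])).
    replace (delta H (x ++ [S y]) w) with
      ((fun z => delta H (x ++ [y]) z * delta G (x ++ [y; z]) w) z0).
    + apply (SumN_point (fun z => delta H (x ++ [y]) z * delta G (x ++ [y; z]) w) z0).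
      * intros j Hj. unfold delta. fold z0. rewrite (proj2 (Nat.eqb_neq j z0) Hj). lra.
      * unfold delta at 1. fold z0. rewrite Nat.eqb_refl.
        pose proof (delta_nonneg G (x ++ [y; z0]) w). lra.
    + simpl. unfold delta at 1. fold z0. rewrite Nat.eqb_refl. unfold delta.
      rewrite ES by auto. fold z0. lra.
Qed.


Open Scope nat_scope.

Lemma DPR1c k f h : DPR 1 (fun l => f (l@0)) -> DPR k h -> DPR k (fun x => f (h x)).
Proof.
  intros Hf Hh. eapply DPR_ext. apply (DPR_comp k 1 _ [h] Hf); auto.
  intros H [<-|[]]; auto. intros; reflexivity.
Qed.
Lemma DPR2c k f h1 h2 : DPR 2 (fun l => f (l@0) (l@1)) -> DPR k h1 -> DPR k h2 ->
  DPR k (fun x => f (h1 x) (h2 x)).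
Proof.
  intros Hf H1 H2. eapply DPR_ext. apply (DPR_comp k 2 _ [h1;h2] Hf); auto.
  intros H [<-|[<-|[]]]; auto. intros; reflexivity.
Qed.
Lemma DPR3c k f h1 h2 h3 : DPR 3 (fun l => f (l@0) (l@1) (l@2)) -> DPR k h1 -> DPR k h2 -> DPR k h3 ->
  DPR k (fun x => f (h1 x) (h2 x) (h3 x)).
Proof.
  intros Hf H1 H2 H3. eapply DPR_ext. apply (DPR_comp k 3 _ [h1;h2;h3] Hf); auto.
  intros H [<-|[<-|[<-|[]]]]; auto. intros; reflexivity.
Qed.

Lemma DPR_S k h : DPR k h -> DPR k (fun x => S (h x)).
Proof. intros. apply (DPR1c k S h DPR_succ1 H). Qed.

Lemma DPR_const k c : (0 < k)%nat -> DPR k (fun _ => c).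
Proof.
  intros Hk. induction c.
  - apply (DPR1c k (fun _ => 0%nat) (fun l => l@0)). apply DPR_zero1. apply DPR_proj; auto.
  - apply (DPR_S k (fun _ => c)); auto.
Qed.

Lemma DPR_rec2 (f : nat -> nat -> nat) base step :
  DPR 1 (fun l => base (l@0)) -> DPR 3 (fun l => step (l@0) (l@1) (l@2)) ->
  (forall a, f a 0 = base a) -> (forall a n, f a (S n) = step a n (f a n)) ->
  DPR 2 (fun l => f (l@0) (l@1)).
Proof.
  intros Hb Hs E0 ES. apply (DPR_rec 1 _ _ _ Hb Hs).
  - intros x Hx. destruct x as [|a [|]]; try discriminate. simpl. auto.
  - intros x y Hx. destruct x as [|a [|]]; try discriminate. simpl. auto.
Qed.

Lemma DPR_rec3 (f : nat -> nat -> nat -> nat) base step :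
  DPR 2 (fun l => base (l@0) (l@1)) -> DPR 4 (fun l => step (l@0) (l@1) (l@2) (l@3)) ->
  (forall a b, f a b 0 = base a b) -> (forall a b n, f a b (S n) = step a b n (f a b n)) ->
  DPR 3 (fun l => f (l@0) (l@1) (l@2)).
Proof.
  intros Hb Hs E0 ES. apply (DPR_rec 2 _ _ _ Hb Hs).
  - intros x Hx. destruct x as [|a [|b [|]]]; try discriminate. simpl. auto.
  - intros x y Hx. destruct x as [|a [|b [|]]]; try discriminate. simpl. auto.
Qed.

Definition ifz (a b c : nat) : nat := match c with O => a | S _ => b end.

Ltac dpr0 :=
  first [ apply DPR_const; lia
        | apply DPR_proj; lia
        | apply DPR_S ].

Lemma DPR_add2 : DPR 2 (fun l => l@0 + l@1)%nat.
Proof.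
  apply (DPR_rec2 Nat.add (fun a => a) (fun a n acc => S acc)).
  - apply DPR_proj; lia.
  - apply DPR_S. apply DPR_proj; lia.
  - intros; lia.
  - intros; lia.
Qed.
Lemma DPR_add k h1 h2 : DPR k h1 -> DPR k h2 -> DPR k (fun x => h1 x + h2 x)%nat.
Proof. apply (DPR2c k Nat.add). apply DPR_add2. Qed.

Lemma DPR_mul2 : DPR 2 (fun l => l@0 * l@1)%nat.
Proof.
  apply (DPR_rec2 Nat.mul (fun a => 0%nat) (fun a n acc => acc + a)%nat).
  - apply DPR_const; lia.
  - apply (DPR_add 3 (fun l => l@2) (fun l => l@0)); apply DPR_proj; lia.
  - intros; lia.
  - intros; lia.
Qed.
Lemma DPR_mul k h1 h2 : DPR k h1 -> DPR k h2 -> DPR k (fun x => h1 x * h2 x)%nat.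
Proof. apply (DPR2c k Nat.mul). apply DPR_mul2. Qed.

Lemma DPR_pred2 : DPR 2 (fun l => Nat.pred (l@1)).
Proof.
  apply (DPR_rec2 (fun _ n => Nat.pred n) (fun a => 0%nat) (fun a n acc => n)).
  - apply DPR_const; lia.
  - apply DPR_proj; lia.
  - auto. - auto.
Qed.
Lemma DPR_pred k h : DPR k h -> DPR k (fun x => Nat.pred (h x)).
Proof.
  intros H. apply (DPR2c k (fun _ n => Nat.pred n) h h DPR_pred2 H H).
Qed.

Lemma DPR_sub2 : DPR 2 (fun l => l@0 - l@1)%nat.
Proof.
  apply (DPR_rec2 Nat.sub (fun a => a) (fun a n acc => Nat.pred acc)).
  - apply DPR_proj; lia.
  - apply (DPR_pred 3 (fun l => l@2)). apply DPR_proj; lia.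
  - intros; lia.
  - intros; lia.
Qed.
Lemma DPR_sub k h1 h2 : DPR k h1 -> DPR k h2 -> DPR k (fun x => h1 x - h2 x)%nat.
Proof. apply (DPR2c k Nat.sub). apply DPR_sub2. Qed.

Lemma DPR_ifz3 : DPR 3 (fun l => ifz (l@0) (l@1) (l@2)).
Proof.
  apply (DPR_rec3 ifz (fun a b => a) (fun a b n acc => b)).
  - apply DPR_proj; lia.
  - apply DPR_proj; lia.
  - auto. - auto.
Qed.
Lemma DPR_ifz k h1 h2 h3 : DPR k h1 -> DPR k h2 -> DPR k h3 -> DPR k (fun x => ifz (h1 x) (h2 x) (h3 x)).
Proof. apply (DPR3c k ifz). apply DPR_ifz3. Qed.

Lemma DPR_pow2 : DPR 2 (fun l => (l@0) ^ (l@1))%nat.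
Proof.
  apply (DPR_rec2 Nat.pow (fun a => 1%nat) (fun a n acc => a * acc)%nat).
  - apply DPR_const; lia.
  - apply DPR_mul; apply DPR_proj; lia.
  - auto. - auto.
Qed.
Lemma DPR_pow k h1 h2 : DPR k h1 -> DPR k h2 -> DPR k (fun x => h1 x ^ h2 x)%nat.
Proof. apply (DPR2c k Nat.pow). apply DPR_pow2. Qed.

Ltac dpr1 := first [ dpr0 | apply DPR_add | apply DPR_mul | apply DPR_sub
   | apply DPR_pred | apply DPR_ifz | apply DPR_pow ].

Fixpoint modr (d n : nat) : nat :=
  match n with O => O | S n' => ifz 0 (S (modr d n')) (d - S (modr d n')) end.
Fixpoint divr (d n : nat) : nat :=
  match n with O => O | S n' => ifz (S (divr d n')) (divr d n') (d - S (modr d n')) end.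

Lemma DPR_modr2 : DPR 2 (fun l => modr (l@0) (l@1)).
Proof.
  apply (DPR_rec2 modr (fun _ => 0%nat) (fun d n acc => ifz 0 (S acc) (d - S acc))).
  - apply DPR_const; lia.
  - repeat dpr1.
  - auto. - auto.
Qed.
Lemma DPR_modr k h1 h2 : DPR k h1 -> DPR k h2 -> DPR k (fun x => modr (h1 x) (h2 x)).
Proof. apply (DPR2c k modr). apply DPR_modr2. Qed.

Lemma DPR_divr2 : DPR 2 (fun l => divr (l@0) (l@1)).
Proof.
  apply (DPR_rec2 divr (fun _ => 0%nat) (fun d n acc => ifz (S acc) acc (d - S (modr d n)))).
  - apply DPR_const; lia.
  - repeat (first [dpr1 | apply DPR_modr]).
  - auto. - auto.
Qed.
Lemma DPR_divr k h1 h2 : DPR k h1 -> DPR k h2 -> DPR k (fun x => divr (h1 x) (h2 x)).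
Proof. apply (DPR2c k divr). apply DPR_divr2. Qed.

Lemma divmodr d n : (0 < d)%nat -> n = d * divr d n + modr d n /\ modr d n < d.
Proof.
  intros Hd. induction n; simpl. lia.
  destruct IHn as [E L]. unfold ifz.
  destruct (d - S (modr d n))%nat eqn:Ed; lia.
Qed.
Lemma modr_eq d n : (0 < d)%nat -> modr d n = n mod d.
Proof.
  intros Hd. destruct (divmodr d n Hd) as [E L].
  apply (Nat.mod_unique n d (divr d n)); lia.
Qed.
Lemma divr_eq d n : (0 < d)%nat -> divr d n = n / d.
Proof.
  intros Hd. destruct (divmodr d n Hd) as [E L].
  apply (Nat.div_unique n d (divr d n) (modr d n)); lia.
Qed.

Lemma log2_S n : Nat.log2 (S n) = ifz (S (Nat.log2 n)) (Nat.log2 n) (2 ^ S (Nat.log2 n) - S n).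
Proof.
  destruct (Nat.log2_succ_or n) as [E|E]; unfold ifz.
  - pose proof (Nat.log2_spec (S n)). rewrite E in H.
    destruct (2 ^ S (Nat.log2 n) - S n)%nat eqn:X; auto. lia.
  - destruct n. simpl; auto.
    pose proof (Nat.log2_spec (S (S n))). rewrite E in H.
    destruct (2 ^ S (Nat.log2 (S n)) - S (S n))%nat eqn:X; auto.
    exfalso. simpl in X, H. lia.
Qed.

Lemma DPR_log2_2 : DPR 2 (fun l => Nat.log2 (l@1)).
Proof.
  apply (DPR_rec2 (fun _ n => Nat.log2 n) (fun _ => 0%nat)
     (fun a n acc => ifz (S acc) acc (2 ^ S acc - S n))).
  - apply DPR_const; lia.
  - repeat dpr1.
  - auto.
  - intros. apply log2_S.
Qed.
Lemma DPR_log2 k h : DPR k h -> DPR k (fun x => Nat.log2 (h x)).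
Proof. intros H. apply (DPR2c k (fun _ n => Nat.log2 n) h h DPR_log2_2 H H). Qed.

Fixpoint tri (s : nat) : nat := match s with O => O | S s' => tri s' + S s' end.
Fixpoint diag (n : nat) : nat :=
  match n with O => O | S n' => ifz (S (diag n')) (diag n') (tri (S (diag n')) - S n') end.

Lemma DPR_tri2 : DPR 2 (fun l => tri (l@1)).
Proof.
  apply (DPR_rec2 (fun _ n => tri n) (fun _ => 0%nat) (fun a n acc => acc + S n)%nat).
  - apply DPR_const; lia.
  - repeat dpr1.
  - auto. - auto.
Qed.
Lemma DPR_tri k h : DPR k h -> DPR k (fun x => tri (h x)).
Proof. intros H. apply (DPR2c k (fun _ n => tri n) h h DPR_tri2 H H). Qed.

Lemma DPR_diag2 : DPR 2 (fun l => diag (l@1)).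
Proof.
  apply (DPR_rec2 (fun _ n => diag n) (fun _ => 0%nat)
    (fun a n acc => ifz (S acc) acc (tri (S acc) - S n))).
  - apply DPR_const; lia.
  - repeat (first [dpr1 | apply DPR_tri]).
  - auto. - auto.
Qed.
Lemma DPR_diag k h : DPR k h -> DPR k (fun x => diag (h x)).
Proof. intros H. apply (DPR2c k (fun _ n => diag n) h h DPR_diag2 H H). Qed.

Lemma diag_spec n : tri (diag n) <= n < tri (S (diag n)).
Proof.
  induction n. simpl. lia.
  cbn [diag]. unfold ifz. destruct (tri (S (diag n)) - S n)%nat eqn:E; cbn [tri] in *; lia.
Qed.
Lemma tri_mono a b : a <= b -> tri a <= tri b.
Proof. induction 1; simpl; lia. Qed.
Lemma diag_unique s n : tri s <= n < tri (S s) -> diag n = s.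
Proof.
  intros H. pose proof (diag_spec n).
  destruct (Nat.lt_trichotomy (diag n) s) as [L|[E|L]]; auto.
  - pose proof (tri_mono (S (diag n)) s L). lia.
  - pose proof (tri_mono (S s) (diag n) L). lia.
Qed.

Definition pairn (a b : nat) : nat := tri (a + b) + b.
Definition fstn (n : nat) : nat := diag n - (n - tri (diag n)).
Definition sndn (n : nat) : nat := n - tri (diag n).
Lemma diag_pair a b : diag (pairn a b) = a + b.
Proof. apply diag_unique. unfold pairn. simpl. lia. Qed.
Lemma fst_pair a b : fstn (pairn a b) = a.
Proof. unfold fstn. rewrite diag_pair. unfold pairn. lia. Qed.
Lemma snd_pair a b : sndn (pairn a b) = b.
Proof. unfold sndn. rewrite diag_pair. unfold pairn. lia. Qed.

Lemma DPR_pairn k h1 h2 : DPR k h1 -> DPR k h2 -> DPR k (fun x => pairn (h1 x) (h2 x)).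
Proof. intros. unfold pairn. repeat (first [dpr1 | apply DPR_tri]); auto. Qed.
Lemma DPR_fstn k h : DPR k h -> DPR k (fun x => fstn (h x)).
Proof. intros. unfold fstn. repeat (first [dpr1 | apply DPR_tri | apply DPR_diag]); auto. Qed.
Lemma DPR_sndn k h : DPR k h -> DPR k (fun x => sndn (h x)).
Proof. intros. unfold sndn. repeat (first [dpr1 | apply DPR_tri | apply DPR_diag]); auto. Qed.

Fixpoint lookup (l : list nat) (n : nat) : nat :=
  match l with [] => 0 | v :: l' => ifz v (lookup l' (Nat.pred n)) n end.
Lemma lookup_nth l n : lookup l n = nth n l 0.
Proof. revert n; induction l; intros n; destruct n; simpl; auto. Qed.
Lemma DPR_lookup k l h : (0 < k)%nat -> DPR k h -> DPR k (fun x => lookup l (h x)).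
Proof.
  intros Hk H. revert h H. induction l; intros h H; simpl.
  - apply DPR_const; auto.
  - apply DPR_ifz; auto. apply DPR_const; auto. apply (IHl (fun x => Nat.pred (h x))). apply DPR_pred; auto.
Qed.

Ltac dpr_step := first [ apply DPR_const; lia | apply DPR_proj; lia | apply DPR_lookup; [lia|]
   | apply DPR_pairn | apply DPR_fstn | apply DPR_sndn | apply DPR_modr | apply DPR_divr
   | apply DPR_log2 | apply DPR_tri | apply DPR_diag | dpr1 ].
Ltac dpr := repeat dpr_step.


Open Scope nat_scope.

Lemma enc_div_mod a b n : b < n -> modr n (a * n + b) = b /\ divr n (a * n + b) = a.
Proof.
  intros H. rewrite modr_eq, divr_eq by lia. split.
  - symmetry. apply (Nat.mod_unique _ _ a); lia.
  - symmetry. apply (Nat.div_unique _ _ _ b); lia.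
Qed.

Lemma nth_map_seq (f : nat -> nat) K j d : j < K -> nth j (map f (seq 0 K)) d = f j.
Proof.
  intros H. rewrite nth_indep with (d' := f 0) by (rewrite length_map, length_seq; auto).
  rewrite map_nth, seq_nth by auto. auto.
Qed.

Section TM.
Variable M : PTM.

Definition lQ : list (Q M) := proj1_sig (constructive_indefinite_description _ (Q_fin M)).
Definition lS : list (Sigma M) := proj1_sig (constructive_indefinite_description _ (Sigma_fin M)).
Lemma lQ_full q : In q lQ.
Proof. unfold lQ. destruct (constructive_indefinite_description _ _). simpl. apply f. Qed.
Lemma lS_full s : In s lS.
Proof. unfold lS. destruct (constructive_indefinite_description _ _). simpl. apply f. Qed.

Definition iQ (q : Q M) : nat := proj1_sig (constructive_indefinite_description _ (In_nth_error _ _ (lQ_full q))).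
Definition iS (s : Sigma M) : nat := proj1_sig (constructive_indefinite_description _ (In_nth_error _ _ (lS_full s))).
Lemma iQ_spec q : nth_error lQ (iQ q) = Some q.
Proof. unfold iQ. destruct (constructive_indefinite_description _ _). auto. Qed.
Lemma iS_spec s : nth_error lS (iS s) = Some s.
Proof. unfold iS. destruct (constructive_indefinite_description _ _). auto. Qed.

Definition nQ := length lQ.
Definition nS := length lS.
Definition BB := S nS.
Lemma iQ_lt q : iQ q < nQ.
Proof. apply nth_error_Some. rewrite iQ_spec. discriminate. Qed.
Lemma iS_lt s : iS s < nS.
Proof. apply nth_error_Some. rewrite iS_spec. discriminate. Qed.
Definition dQ i := nth i lQ (qs M).
Definition dS i := nth i lS (blank M).
Lemma dQ_iQ q : dQ (iQ q) = q.
Proof. apply nth_error_nth. apply iQ_spec. Qed.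
Lemma dS_iS s : dS (iS s) = s.
Proof. apply nth_error_nth. apply iS_spec. Qed.

Fixpoint codeL (l : list (Sigma M)) : nat :=
  match l with [] => 0 | s :: l' => codeL l' * BB + S (iS s) end.

Lemma codeL_cons s l : modr BB (codeL (s :: l)) = S (iS s) /\ divr BB (codeL (s :: l)) = codeL l.
Proof. simpl. apply enc_div_mod. pose proof (iS_lt s). unfold BB. lia. Qed.

Definition cc (C : config M) : nat :=
  pairn (codeL (cleft C)) ((codeL (cright C) * nS + iS (ccur C)) * nQ + iQ (cstate C)).

Definition Lc n := fstn n.
Definition qi n := modr nQ (sndn n).
Definition ai n := modr nS (divr nQ (sndn n)).
Definition Rc n := divr nS (divr nQ (sndn n)).

Lemma acc_cc C : Lc (cc C) = codeL (cleft C) /\ qi (cc C) = iQ (cstate C) /\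
   ai (cc C) = iS (ccur C) /\ Rc (cc C) = codeL (cright C).
Proof.
  unfold Lc, qi, ai, Rc, cc. rewrite fst_pair, snd_pair.
  destruct (enc_div_mod (codeL (cright C) * nS + iS (ccur C)) (iQ (cstate C)) nQ (iQ_lt _)) as [E1 E2].
  destruct (enc_div_mod (codeL (cright C)) (iS (ccur C)) nS (iS_lt _)) as [E3 E4].
  rewrite E1, E2, E3, E4. auto.
Qed.

Definition mv (m : move) : nat := match m with mL => 0 | mS => 1 | mR => 2 end.
Definition enc (t : Q M * Sigma M * move) : nat :=
  let '(q', a', m) := t in (iQ q' * nS + iS a') * 3 + mv m.
Definition deltab (b : bool) := if b then delta1 M else delta0 M.
Definition tab (b : bool) : list nat :=
  map (fun j => enc (deltab b (dQ (j / nS)) (dS (j mod nS)))) (seq 0 (nQ * nS)).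

Lemma lookup_tab b q a : lookup (tab b) (iQ q * nS + iS a) = enc (deltab b q a).
Proof.
  rewrite lookup_nth. unfold tab.
  pose proof (iQ_lt q). pose proof (iS_lt a).
  assert (Hlt : iQ q * nS + iS a < nQ * nS) by nia.
  rewrite nth_map_seq by auto.
  assert (E1 : (iQ q * nS + iS a) / nS = iQ q) by (symmetry; apply (Nat.div_unique _ _ _ (iS a)); lia).
  assert (E2 : (iQ q * nS + iS a) mod nS = iS a) by (symmetry; apply (Nat.mod_unique _ _ (iQ q)); lia).
  rewrite E1, E2, dQ_iQ, dS_iS. auto.
Qed.

Definition stepc (bn n : nat) : nat :=
  let L := Lc n in let q := qi n in let a := ai n in let R := Rc n in
  let e := ifz (lookup (tab false) (q * nS + a)) (lookup (tab true) (q * nS + a)) bn in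
  let m := modr 3 e in let a' := modr nS (divr 3 e) in let q' := divr nS (divr 3 e) in
  ifz (ifz (pairn 0 (((R * BB + S a') * nS + iS (blank M)) * nQ + q'))
           (pairn (divr BB L) (((R * BB + S a') * nS + Nat.pred (modr BB L)) * nQ + q')) L)
      (ifz (pairn L ((R * nS + a') * nQ + q'))
           (ifz (pairn (L * BB + S a') ((0 * nS + iS (blank M)) * nQ + q'))
                (pairn (L * BB + S a') ((divr BB R * nS + Nat.pred (modr BB R)) * nQ + q')) R)
           (Nat.pred m)) m.

Lemma stepc_cc b C : stepc (Nat.b2n b) (cc C) = cc (step b C).
Proof.
  destruct (acc_cc C) as [HL [Hq [Ha HR]]].
  unfold stepc. cbv zeta. rewrite HL, Hq, Ha, HR.
  assert (He : ifz (lookup (tab false) (iQ (cstate C) * nS + iS (ccur C)))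
        (lookup (tab true) (iQ (cstate C) * nS + iS (ccur C))) (Nat.b2n b) =
        enc (deltab b (cstate C) (ccur C))).
  { destruct b; simpl; apply lookup_tab. }
  rewrite He. unfold step. fold (deltab b).
  destruct (deltab b (cstate C) (ccur C)) as [[q' a'] m] eqn:Ed. simpl enc.
  assert (Hm : mv m < 3) by (destruct m; simpl; lia).
  destruct (enc_div_mod (iQ q' * nS + iS a') (mv m) 3 Hm) as [E1 E2].
  rewrite E1, E2.
  destruct (enc_div_mod (iQ q') (iS a') nS (iS_lt _)) as [E3 E4].
  rewrite E3, E4.
  destruct C as [l c r q]; simpl in *.
  destruct m; simpl.
  - destruct l as [|s l].
    + reflexivity.
    + destruct (codeL_cons s l) as [E5 E6]. cbn [codeL] in E5, E6 |- *. rewrite E5, E6.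
      replace (codeL l * BB + S (iS s)) with (S (codeL l * BB + iS s)) by lia. reflexivity.
  - reflexivity.
  - destruct r as [|s r].
    + reflexivity.
    + destruct (codeL_cons s r) as [E5 E6]. cbn [codeL] in E5, E6 |- *. rewrite E5, E6.
      replace (codeL r * BB + S (iS s)) with (S (codeL r * BB + iS s)) by lia. reflexivity.
Qed.
End TM.


Open Scope nat_scope.

Section TM2.
Variable M : PTM.

Definition ftab : list nat := map (fun i => if final M (dQ M i) then 1 else 0) (seq 0 (nQ M)).
Definition finc (n : nat) : nat := ifz 0 (ifz 1 0 (Rc M n)) (lookup ftab (qi M n)).

Lemma finc_cc C : finc (cc M C) = if isFinal C then 1 else 0.
Proof.
  destruct (acc_cc M C) as [HL [Hq [Ha HR]]]. unfold finc. rewrite Hq, HR.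
  rewrite lookup_nth. unfold ftab. rewrite nth_map_seq by apply iQ_lt. rewrite dQ_iQ.
  unfold isFinal. destruct (final M (cstate C)); simpl; auto.
  destruct (cright C); simpl; auto.
  cbn [codeL]. replace (codeL M l * BB M + S (iS M s)) with (S (codeL M l * BB M + iS M s)) by lia. auto.
Qed.

Definition nextst (bn s : nat) : nat :=
  ifz 0 (ifz (S (stepc M bn (Nat.pred s))) 0 (finc (Nat.pred s))) s.

Definition codeopt (o : option (config M)) : nat :=
  match o with None => 0 | Some C => S (cc M C) end.

Definition runf (b : list bool) (s : nat) : nat := fold_left (fun s c => nextst (Nat.b2n c) s) b s.

Lemma runf_0 b : runf b 0 = 0.
Proof. induction b; simpl; auto. Qed.

Lemma run_fold C b : codeopt (run C b) = runf b (S (cc M C)).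
Proof.
  revert C; induction b as [|c b IH]; intros C; [reflexivity|].
  change (runf (c::b) (S (cc M C))) with (runf b (nextst (Nat.b2n c) (S (cc M C)))).
  cbn [run].
  replace (nextst (Nat.b2n c) (S (cc M C))) with (if isFinal C then 0 else S (cc M (step c C))).
  - destruct (isFinal C).
    + symmetry; apply runf_0.
    + apply IH.
  - unfold nextst. cbn [ifz Nat.pred]. rewrite finc_cc, stepc_cc. destruct (isFinal C); auto.
Qed.

Lemma pbits_length p : length (pbits p) = Nat.log2 (Pos.to_nat p).
Proof.
  induction p; simpl pbits.
  - rewrite length_app, IHp. rewrite Pos2Nat.inj_xI.
    replace (S (2 * Pos.to_nat p)) with (2 * Pos.to_nat p + 1) by lia.
    rewrite Nat.log2_succ_double by lia. simpl. lia.
  - rewrite length_app, IHp. rewrite Pos2Nat.inj_xO.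
    rewrite Nat.log2_double by lia. simpl. lia.
  - auto.
Qed.

Lemma pbits_nth p t : t < length (pbits p) ->
  nth t (pbits p) false = Nat.testbit (Pos.to_nat p) (length (pbits p) - 1 - t).
Proof.
  revert t; induction p; intros t Ht; simpl pbits in *.
  - rewrite length_app in *. simpl length in *.
    rewrite Pos2Nat.inj_xI. replace (S (2 * Pos.to_nat p)) with (2 * Pos.to_nat p + 1) by lia.
    destruct (Nat.eq_dec t (length (pbits p))).
    + subst. rewrite app_nth2 by lia. rewrite Nat.sub_diag.
      replace (length (pbits p) + 1 - 1 - length (pbits p)) with 0 by lia.
      rewrite Nat.testbit_odd_0. auto.
    + rewrite app_nth1 by lia. rewrite IHp by lia.
      replace (length (pbits p) + 1 - 1 - t) with (S (length (pbits p) - 1 - t)) by lia.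
      rewrite Nat.testbit_odd_succ by lia. auto.
  - rewrite length_app in *. simpl length in *.
    rewrite Pos2Nat.inj_xO.
    destruct (Nat.eq_dec t (length (pbits p))).
    + subst. rewrite app_nth2 by lia. rewrite Nat.sub_diag.
      replace (length (pbits p) + 1 - 1 - length (pbits p)) with 0 by lia.
      rewrite Nat.testbit_even_0. auto.
    + rewrite app_nth1 by lia. rewrite IHp by lia.
      replace (length (pbits p) + 1 - 1 - t) with (S (length (pbits p) - 1 - t)) by lia.
      rewrite Nat.testbit_even_succ by lia. auto.
  - simpl in Ht. lia.
Qed.

Lemma bar_length n : length (bar n) = Nat.log2 (S n).
Proof. unfold bar. rewrite pbits_length, SuccNat2Pos.id_succ. auto. Qed.

Lemma bar_nth n t : t < length (bar n) ->
  nth t (bar n) false = Nat.testbit (S n) (Nat.log2 (S n) - 1 - t).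
Proof.
  intros H. unfold bar in *. rewrite pbits_nth by auto.
  rewrite pbits_length, SuccNat2Pos.id_succ. auto.
Qed.

Definition bitn (m i : nat) : nat := modr 2 (divr (2 ^ i) m).
Lemma bitn_b2n m i : bitn m i = Nat.b2n (Nat.testbit m i).
Proof.
  unfold bitn. rewrite Nat.testbit_spec'. rewrite modr_eq, divr_eq; auto.
  pose proof (Nat.pow_nonzero 2 i). lia.
Qed.

Definition symd (bn : nat) : nat := ifz (S (iS M (sym0 M))) (S (iS M (sym1 M))) bn.
Fixpoint rcode (m t : nat) : nat :=
  match t with O => 0 | S t' => rcode m t' * BB M + symd (bitn m t') end.

Lemma rcode_spec (v : list bool) m :
  (forall i, i < length v -> nth i v false = Nat.testbit m (length v - 1 - i)) ->
  codeL M (map (bit2sym M) v) = rcode m (length v).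
Proof.
  induction v as [|c v IH]; intros H; simpl; auto.
  rewrite IH.
  - f_equal. rewrite bitn_b2n. specialize (H 0 ltac:(simpl; lia)). simpl in H.
    replace (length v - 0 - 0) with (length v) in H by lia. rewrite <- H.
    destruct c; reflexivity.
  - intros i Hi. specialize (H (S i) ltac:(simpl; lia)). simpl in H. rewrite H. f_equal. lia.
Qed.

Definition initc (a : nat) : nat :=
  ifz (pairn 0 (iS M (blank M) * nQ M + iQ M (qs M)))
      (pairn 0 ((rcode (S a) (Nat.pred (Nat.log2 (S a))) * nS M
                  + ifz (iS M (sym0 M)) (iS M (sym1 M)) (bitn (S a) (Nat.pred (Nat.log2 (S a)))))
                * nQ M + iQ M (qs M)))
      (Nat.log2 (S a)).

Lemma initc_cc a : initc a = cc M (initConf M (bar a)).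
Proof.
  unfold initc, initConf. rewrite <- bar_length.
  pose proof (bar_nth a) as Hn. pose proof (bar_length a) as Hl.
  destruct (bar a) as [|c v] eqn:E; simpl.
  - reflexivity.
  - assert (Hr : codeL M (map (bit2sym M) v) = rcode (S a) (length v)).
    { apply rcode_spec.
      intros i Hi. specialize (Hn (S i) ltac:(simpl; lia)). simpl in Hn. rewrite Hn.
      f_equal. simpl in Hl. lia. }
    assert (Hc : iS M (bit2sym M c) = ifz (iS M (sym0 M)) (iS M (sym1 M)) (bitn (S a) (length v))).
    { rewrite bitn_b2n. specialize (Hn 0 ltac:(simpl; lia)). simpl in Hn.
      simpl in Hl. rewrite <- Hl in Hn.
      replace (length v) with (S (length v) - 1 - 0) by lia. rewrite <- Hn.
      destruct c; reflexivity. }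
    unfold cc; simpl. rewrite Hr, Hc. reflexivity.
Qed.

Fixpoint simt (a b t : nat) : nat :=
  match t with
  | O => S (initc a)
  | S t' => nextst (bitn (S b) (Nat.log2 (S b) - 1 - t')) (simt a b t')
  end.

Lemma firstn_S_nth {A} (l : list A) t d : t < length l -> firstn (S t) l = firstn t l ++ [nth t l d].
Proof.
  revert t; induction l; intros t H; simpl in *. lia.
  destruct t; simpl; auto. rewrite IHl by lia. auto.
Qed.

Lemma simt_spec a b t : t <= length (bar b) ->
  simt a b t = runf (firstn t (bar b)) (S (initc a)).
Proof.
  induction t; intros H; [reflexivity|].
  cbn [simt]. rewrite IHt by lia. rewrite (firstn_S_nth _ t false) by lia.
  unfold runf. rewrite fold_left_app. simpl. f_equal.
  rewrite bar_nth by lia. rewrite bitn_b2n. auto.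
Qed.

Definition lf (a b : nat) : nat :=
  ifz 0 (finc (Nat.pred (simt a b (Nat.log2 (S b))))) (simt a b (Nat.log2 (S b))).

Lemma lf_spec a b : lf a b = if isLeaf M a b then 1 else 0.
Proof.
  unfold lf, isLeaf, label. rewrite simt_spec by (rewrite bar_length; auto).
  rewrite <- bar_length, firstn_all, initc_cc, <- run_fold.
  destruct (run (initConf M (bar a)) (bar b)); simpl; auto.
  apply finc_cc.
Qed.

Lemma DPR_stepc k h1 h2 : DPR k h1 -> DPR k h2 -> DPR k (fun x => stepc M (h1 x) (h2 x)).
Proof.
  intros H1 H2. apply (DPR2c k (stepc M)); auto.
  unfold stepc, Lc, qi, ai, Rc. cbv beta zeta. dpr.
Qed.
Lemma DPR_finc k h : DPR k h -> DPR k (fun x => finc (h x)).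
Proof.
  intros H1. apply (DPR1c k finc); auto.
  unfold finc, Lc, qi, ai, Rc. dpr.
Qed.
Lemma DPR_nextst k h1 h2 : DPR k h1 -> DPR k h2 -> DPR k (fun x => nextst (h1 x) (h2 x)).
Proof.
  intros H1 H2. apply (DPR2c k nextst); auto.
  unfold nextst. repeat (first [apply DPR_stepc | apply DPR_finc | dpr_step]).
Qed.
Lemma DPR_bitn k h1 h2 : DPR k h1 -> DPR k h2 -> DPR k (fun x => bitn (h1 x) (h2 x)).
Proof. intros. apply (DPR2c k bitn); auto. unfold bitn. dpr. Qed.
Lemma DPR_rcode k h1 h2 : DPR k h1 -> DPR k h2 -> DPR k (fun x => rcode (h1 x) (h2 x)).
Proof.
  intros H1 H2. apply (DPR2c k rcode); auto.
  apply (DPR_rec2 rcode (fun _ => 0) (fun m t acc => acc * BB M + symd (bitn m t))); auto.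
  - apply DPR_const; lia.
  - unfold symd. repeat (first [apply DPR_bitn | dpr_step]).
Qed.
Lemma DPR_initc k h : DPR k h -> DPR k (fun x => initc (h x)).
Proof.
  intros H. apply (DPR1c k initc); auto.
  unfold initc. repeat (first [apply DPR_rcode | apply DPR_bitn | dpr_step]).
Qed.
Lemma DPR_simt k h1 h2 h3 : DPR k h1 -> DPR k h2 -> DPR k h3 -> DPR k (fun x => simt (h1 x) (h2 x) (h3 x)).
Proof.
  intros H1 H2 H3. apply (DPR3c k simt); auto.
  apply (DPR_rec3 simt (fun a b => S (initc a))
    (fun a b t acc => nextst (bitn (S b) (Nat.log2 (S b) - 1 - t)) acc)); auto.
  - repeat (first [apply DPR_initc | dpr_step]).
  - repeat (first [apply DPR_nextst | apply DPR_bitn | dpr_step]).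
Qed.
Lemma DPR_lf k h1 h2 : DPR k h1 -> DPR k h2 -> DPR k (fun x => lf (h1 x) (h2 x)).
Proof.
  intros H1 H2. apply (DPR2c k lf); auto.
  unfold lf. repeat (first [apply DPR_finc | apply DPR_simt | dpr_step]).
Qed.
End TM2.


Open Scope R_scope.

Definition wgt (P : list bool -> bool) (b : list bool) : R := if P b then / 2 ^ length b else 0.
Definition pfree (P : list bool -> bool) := forall b c, P b = true -> P (b ++ c) = true -> c = [].

Lemma wgt_nil_le P : wgt P [] <= 1.
Proof. unfold wgt. destruct (P []); simpl; lra. Qed.

Lemma nil_only P S : NoDup S -> (forall b, In b S -> b <> [] -> wgt P b = 0) ->
  lsumR (map (wgt P) S) <= 1 /\ (~ In [] S -> lsumR (map (wgt P) S) = 0).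
Proof.
  induction S as [|b S IH]; intros ND H; simpl.
  - unfold lsumR; simpl. split; intros; lra.
  - inversion ND as [|b0 S0 Hnin ND' E]; subst.
    destruct (IH ND' (fun b1 Hb => H b1 (or_intror Hb))) as [IH1 IH2].
    unfold lsumR in *; simpl.
    destruct b as [|c b'].
    + rewrite IH2 by auto. pose proof (wgt_nil_le P). split; intros; [lra|]. exfalso; auto.
    + rewrite H by (simpl; auto; discriminate). split; [lra| intros Hn].
      rewrite IH2; [lra|]. intros Hin; apply Hn; auto.
Qed.

Definition tlb (d : bool) (S : list (list bool)) : list (list bool) :=
  flat_map (fun b => match b with [] => [] | c :: b' => if Bool.eqb c d then [b'] else [] end) S.

Lemma In_tlb d S b : In b (tlb d S) -> In (d :: b) S.
Proof.
  unfold tlb. intros H. apply in_flat_map in H as [b0 [Hb0 Hin]].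
  destruct b0 as [|c b']; simpl in Hin; [destruct Hin|].
  destruct (Bool.eqb c d) eqn:E; simpl in Hin; [|destruct Hin].
  destruct Hin as [<-|[]]. apply Bool.eqb_prop in E. subst. auto.
Qed.

Lemma NoDup_tlb d S : NoDup S -> NoDup (tlb d S).
Proof.
  induction S as [|b S IH]; intros ND; simpl. constructor.
  inversion ND; subst.
  destruct b as [|c b']; simpl; auto.
  destruct (Bool.eqb c d) eqn:E; simpl; auto.
  constructor; auto. intros Hin. apply In_tlb in Hin. apply Bool.eqb_prop in E. subst. auto.
Qed.

Lemma wgt_cons P c b : wgt P (c :: b) = / 2 * wgt (fun b => P (c :: b)) b.
Proof.
  unfold wgt. simpl. destruct (P (c :: b)). rewrite Rinv_mult. auto. lra.
Qed.

Lemma split_sum P S : P [] = false ->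
  lsumR (map (wgt P) S) = / 2 * lsumR (map (wgt (fun b => P (false :: b))) (tlb false S))
     + / 2 * lsumR (map (wgt (fun b => P (true :: b))) (tlb true S)).
Proof.
  intros H0. induction S as [|b S IH]. unfold lsumR; simpl; lra.
  unfold tlb in *. simpl flat_map. rewrite !map_app, !lsumR_app.
  change (lsumR (map (wgt P) (b :: S))) with (wgt P b + lsumR (map (wgt P) S)).
  rewrite IH.
  destruct b as [|c b'].
  - unfold wgt at 1. rewrite H0. unfold lsumR; simpl. lra.
  - rewrite wgt_cons. destruct c; simpl; unfold lsumR; simpl; lra.
Qed.

Lemma kraft m : forall P S, pfree P -> NoDup S -> (forall b, In b S -> (length b <= m)%nat) ->
  lsumR (map (wgt P) S) <= 1.
Proof.
  induction m; intros P S Hp ND HL.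
  - apply (nil_only P S ND). intros b Hb Hne. specialize (HL b Hb).
    destruct b; simpl in HL; [congruence|lia].
  - destruct (P []) eqn:E.
    + apply (nil_only P S ND). intros b Hb Hne. unfold wgt.
      destruct (P b) eqn:Eb; auto. specialize (Hp [] b E Eb). congruence.
    + rewrite (split_sum P S E).
      assert (forall d, lsumR (map (wgt (fun b => P (d :: b))) (tlb d S)) <= 1).
      { intros d. apply IHm.
        - intros b c H1 H2. apply (Hp (d :: b) c); auto.
        - apply NoDup_tlb; auto.
        - intros b Hb. apply In_tlb in Hb. specialize (HL _ Hb). simpl in HL. lia. }
      pose proof (H false). pose proof (H true). lra.
Qed.

Lemma kraft_list P S : pfree P -> NoDup S -> lsumR (map (wgt P) S) <= 1.
Proof.
  intros Hp ND. apply (kraft (fold_right Nat.max 0%nat (map (@length bool) S))); auto.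
  intros b Hb. clear ND. induction S; simpl in *; [destruct Hb|].
  destruct Hb as [<-|Hb]; [lia|]. specialize (IHS Hb). lia.
Qed.

Lemma run_app {M : PTM} (C : config M) b c :
  run C (b ++ c) = match run C b with Some C' => run C' c | None => None end.
Proof.
  revert C; induction b; intros C; simpl; auto.
  destruct (isFinal C); auto.
Qed.

Definition leafP (M : PTM) (x : nat) (b : list bool) : bool :=
  match run (initConf M (bar x)) b with Some C => isFinal C | None => false end.

Lemma leafP_pfree M x : pfree (leafP M x).
Proof.
  intros b c H1 H2. unfold leafP in *. rewrite run_app in H2.
  destruct (run (initConf M (bar x)) b) as [C|]; [|discriminate].
  destruct c as [|d c]; auto. simpl in H2. rewrite H1 in H2. discriminate.
Qed.

Lemma pbits_inj p q : pbits p = pbits q -> p = q.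
Proof.
  revert q; induction p; destruct q; simpl; intros H; auto;
   try (apply app_inj_tail in H as [H1 H2]; try discriminate; f_equal; auto);
   try (symmetry in H; apply app_cons_not_nil in H; destruct H);
   try (apply app_cons_not_nil in H; destruct H).
Qed.

Lemma bar_inj : Injective bar.
Proof. intros n m H. unfold bar in H. apply pbits_inj in H. apply SuccNat2Pos.inj; auto. Qed.

Definition wl (M : PTM) (x k : nat) : R := if isLeaf M x k then PT M x k else 0.

Lemma fsum_wl M x n : fsum n (wl M x) = lsumR (map (wgt (leafP M x)) (map bar (seq 0 n))).
Proof.
  induction n. unfold lsumR; simpl; auto.
  rewrite seq_S, !map_app, lsumR_app. simpl. rewrite IHn. unfold lsumR at 2; simpl.
  unfold wl, wgt, isLeaf, leafP, label, PT. destruct (run _ _); unfold lsumR; simpl; lra.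
Qed.

Lemma kraft_leaf M x n : fsum n (wl M x) <= 1.
Proof.
  rewrite fsum_wl. apply kraft_list. apply leafP_pfree.
  apply Injective_map_NoDup. apply bar_inj. apply seq_NoDup.
Qed.

Lemma PT_pos M x y : 0 < PT M x y.
Proof. unfold PT. apply Rinv_0_lt_compat. apply pow_lt. lra. Qed.

Lemma P1prod_eq M x n : P1prod M x n = 1 - fsum n (wl M x).
Proof.
  induction n; simpl. lra.
  rewrite IHn. unfold PT1_from.
  pose proof (kraft_leaf M x (S n)) as K. simpl in K. unfold wl in *.
  destruct (isLeaf M x n).
  - pose proof (PT_pos M x n). field. lra.
  - lra.
Qed.

Lemma P1prod_ge M x y : isLeaf M x y = true -> PT M x y <= P1prod M x y.
Proof.
  intros H. rewrite P1prod_eq. pose proof (kraft_leaf M x (S y)) as K. simpl in K.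
  unfold wl at 2 in K. rewrite H in K. lra.
Qed.

Lemma PT1_nonneg M x y : 0 <= PT1 M x y.
Proof.
  unfold PT1, PT1_from. destruct (isLeaf M x y) eqn:E; [|lra].
  pose proof (P1prod_ge M x y E). pose proof (PT_pos M x y).
  assert (PT M x y / P1prod M x y <= 1).
  { unfold Rdiv. apply (Rmult_le_reg_r (P1prod M x y)). lra.
    rewrite Rmult_assoc, Rinv_l by lra. lra. }
  lra.
Qed.

Lemma fprod_P1 M a y : fprod y (fun z => PT1 M a z) = P1prod M a y.
Proof. induction y; simpl; auto. rewrite IHy. auto. Qed.

Lemma mu_part M : IsMu 1 (PTC M) (CF M).
Proof.
  intros x Hx y. destruct x as [|a [|]]; try discriminate.
  exists (fun z => PT1 M a z). split.
  - intros z. simpl.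
    apply (SumN_point (fun j => PTC M [a; z] (S j)) 0%nat).
    + intros j Hj. destruct j; [lia|]. reflexivity.
    + apply PT1_nonneg.
  - simpl. rewrite fprod_P1. unfold CF, PTC, PT0, PT0_from. simpl.
    destruct (isLeaf M a y) eqn:E; [|lra].
    pose proof (P1prod_ge M a y E). pose proof (PT_pos M a y).
    field. lra.
Qed.


Open Scope R_scope.

Section Fin.
Variable M : PTM.

Fixpoint sumb (a b n : nat) : nat :=
  match n with
  | O => O
  | S n' => (sumb a b n' + lf M a n' * 2 ^ (Nat.log2 (S b) - Nat.log2 (S n')))%nat
  end.
Definition Qd (a b : nat) : nat := (2 ^ Nat.log2 (S b) - sumb a b b)%nat.
Definition Fout (a b k : nat) : nat :=
  ifz 1 (ifz 0 (1 - modr 2 (divr (Qd a b) (2 ^ S k))) (Qd a b - 1)) (lf M a b).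
Definition FoutL (l : list nat) : nat := Fout (l@0) (l@1) (l@2).

Lemma DPR_sumb k h1 h2 h3 : DPR k h1 -> DPR k h2 -> DPR k h3 -> DPR k (fun x => sumb (h1 x) (h2 x) (h3 x)).
Proof.
  intros H1 H2 H3. apply (DPR3c k sumb); auto.
  apply (DPR_rec3 sumb (fun _ _ => 0%nat)
     (fun a b n acc => acc + lf M a n * 2 ^ (Nat.log2 (S b) - Nat.log2 (S n)))%nat); auto.
  - apply DPR_const; lia.
  - repeat (first [apply DPR_lf | dpr_step]).
Qed.

Lemma DPR_FoutL : DPR 3 FoutL.
Proof.
  unfold FoutL, Fout, Qd. repeat (first [apply DPR_lf | apply DPR_sumb | dpr_step]).
Qed.

Lemma sumb_INR a b n : (n <= b)%nat ->
  INR (sumb a b n) = 2 ^ Nat.log2 (S b) * fsum n (wl M a).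
Proof.
  induction n; intros Hn; simpl. lra.
  rewrite plus_INR, IHn by lia. rewrite mult_INR, lf_spec, pow_INR.
  unfold wl, PT. rewrite bar_length.
  assert (Hle : (Nat.log2 (S n) <= Nat.log2 (S b))%nat) by (apply Nat.log2_le_mono; lia).
  set (D := Nat.log2 (S b)) in *. set (Dn := Nat.log2 (S n)) in *.
  assert (E : 2 ^ D = 2 ^ (D - Dn) * 2 ^ Dn).
  { rewrite <- pow_add. f_equal. lia. }
  destruct (isLeaf M a n); simpl.
  - replace (1+1) with 2 by lra. rewrite E. field. apply pow_nonzero. lra.
  - lra.
Qed.

Lemma Qd_INR a b : INR (Qd a b) = 2 ^ Nat.log2 (S b) * P1prod M a b.
Proof.
  unfold Qd. rewrite P1prod_eq.
  pose proof (sumb_INR a b b (le_n _)) as E.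
  pose proof (kraft_leaf M a b) as K.
  assert (Hle : (sumb a b b <= 2 ^ Nat.log2 (S b))%nat).
  { apply INR_le. rewrite E, pow_INR. simpl INR.
    assert (0 < 2 ^ Nat.log2 (S b)) by (apply pow_lt; lra).
    replace (1 + 1) with 2 by lra. nra. }
  rewrite minus_INR by auto. rewrite E, pow_INR. simpl INR. replace (1+1) with 2 by lra. ring.
Qed.

Lemma PT_ratio a b : isLeaf M a b = true ->
  PT M a b / P1prod M a b = / INR (Qd a b) /\ (1 <= Qd a b)%nat.
Proof.
  intros HL. rewrite Qd_INR.
  pose proof (P1prod_ge M a b HL) as H1. pose proof (PT_pos M a b) as H2.
  unfold PT in *. rewrite bar_length in *.
  assert (Hp : 0 < 2 ^ Nat.log2 (S b)) by (apply pow_lt; lra).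
  split.
  - field. split; lra.
  - apply INR_le. rewrite Qd_INR. simpl INR.
    apply (Rmult_le_reg_r (/ 2 ^ Nat.log2 (S b))). apply Rinv_0_lt_compat; auto.
    rewrite Rmult_1_l. replace (2 ^ Nat.log2 (S b) * P1prod M a b * / 2 ^ Nat.log2 (S b))
      with (P1prod M a b) by (field; lra). auto.
Qed.
End Fin.

Lemma fsum_ext N F G : (forall i, F i = G i) -> fsum N F = fsum N G.
Proof. intros H. induction N; simpl; auto. rewrite IHN, H. auto. Qed.
Lemma fsum_minus N F G : fsum N (fun k => F k - G k) = fsum N F - fsum N G.
Proof. induction N; simpl. lra. rewrite IHN. lra. Qed.
Lemma fsum_zero N F : (forall i, F i = 0) -> fsum N F = 0.
Proof. intros H. induction N; simpl; auto. rewrite IHN, H. lra. Qed.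

Lemma geo_sum N : fsum N (fun k => (/ 2) ^ S k) = 1 - (/ 2) ^ N.
Proof. induction N. simpl; lra. cbn [fsum]. rewrite IHN. simpl. lra. Qed.

Definition dig (q k : nat) : nat := ((2 ^ S k / q) mod 2)%nat.

Lemma dig_rec q N : (0 < q)%nat -> (2 ^ S N / q = 2 * (2 ^ N / q) + dig q N)%nat.
Proof.
  intros Hq. unfold dig. rewrite (Nat.div_mod_eq (2 ^ S N / q) 2) at 1.
  f_equal. f_equal. rewrite Nat.Div0.div_div. rewrite Nat.pow_succ_r'.
  replace (q * 2)%nat with (2 * q)%nat by lia.
  rewrite Nat.Div0.div_mul_cancel_l by lia. auto.
Qed.

Lemma dig_le q k : (dig q k <= 1)%nat.
Proof. unfold dig. pose proof (Nat.mod_upper_bound (2 ^ S k / q) 2). lia. Qed.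

Lemma dig_sum q N : (2 <= q)%nat ->
  fsum N (fun k => (/ 2) ^ S k * INR (dig q k)) = INR (2 ^ N / q) * (/ 2) ^ N.
Proof.
  intros Hq. induction N.
  - simpl. rewrite Nat.div_small by lia. simpl. lra.
  - cbn [fsum]. rewrite IHN. rewrite (dig_rec q N ltac:(lia)).
    rewrite plus_INR, mult_INR. simpl INR. simpl pow. field.
Qed.

Lemma dig_bounds q N : (0 < q)%nat ->
  INR (2 ^ N / q) * (/ 2) ^ N <= / INR q /\ / INR q - (/ 2) ^ N <= INR (2 ^ N / q) * (/ 2) ^ N.
Proof.
  intros Hq.
  pose proof (Nat.div_mod_eq (2 ^ N) q) as E. pose proof (Nat.mod_upper_bound (2 ^ N) q ltac:(lia)) as U.
  set (f := (2 ^ N / q)%nat) in *. set (r := ((2 ^ N) mod q)%nat) in *.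
  assert (E' : 2 ^ N = INR q * INR f + INR r).
  { assert (H2 : INR (2 ^ N) = 2 ^ N) by (rewrite pow_INR; f_equal; simpl; lra).
    rewrite <- H2. rewrite E at 1. rewrite plus_INR, mult_INR. auto. }
  assert (Ur : INR r + 1 <= INR q) by (rewrite <- S_INR; apply le_INR; lia).
  assert (Hq' : 0 < INR q) by (apply lt_0_INR; lia).
  assert (Hr : 0 <= INR r) by apply pos_INR.
  assert (P : 0 < 2 ^ N) by (apply pow_lt; lra).
  rewrite pow_inv.
  split.
  - apply (Rmult_le_reg_l (INR q * 2 ^ N)). nra.
    replace (INR q * 2 ^ N * (INR f * / 2 ^ N)) with (INR q * INR f) by (field; lra).
    replace (INR q * 2 ^ N * / INR q) with (2 ^ N) by (field; lra). lra.
  - apply (Rmult_le_reg_l (INR q * 2 ^ N)). nra.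
    replace (INR q * 2 ^ N * (INR f * / 2 ^ N)) with (INR q * INR f) by (field; lra).
    replace (INR q * 2 ^ N * (/ INR q - / 2 ^ N)) with (2 ^ N - INR q) by (field; lra). lra.
Qed.


Open Scope R_scope.

Definition rfun : pfun := fun l y =>
  if Nat.eqb y (l@0) then / 2 else if Nat.eqb y (S (l@0)) then / 2 else 0.
Lemma PR_rfun : PR 1 rfun.
Proof. apply PR_rand. intros; reflexivity. Qed.
Lemma rfun_nonneg l y : 0 <= rfun l y.
Proof. unfold rfun. destruct (Nat.eqb _ _); [lra|]. destruct (Nat.eqb _ _); lra. Qed.

Definition Coin3 : pfun := fun l y => rfun [0%nat] y.
Lemma PR_Coin3 : PR 3 Coin3.
Proof.
  apply (PR_comp_det 3 1 rfun [fun _ => 0%nat] PR_rfun rfun_nonneg); auto.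
  intros H [<-|[]]. apply DPR_const; lia.
Qed.

Definition Geo2 : pfun := fun x k => / 2 * fprod k (fun _ => / 2).
Lemma PR_Geo2 : PR 2 Geo2.
Proof.
  apply (PR_mu 2 Coin3 Geo2 PR_Coin3).
  intros x Hx y. exists (fun _ => / 2). split.
  - intros z. apply (SumN_point (fun j => Coin3 (x ++ [z]) (S j)) 0%nat).
    + intros j Hj. destruct j; [lia|]. reflexivity.
    + unfold Coin3, rfun; simpl. lra.
  - reflexivity.
Qed.
Lemma Geo2_eq x k : Geo2 x k = (/ 2) ^ S k.
Proof.
  unfold Geo2. simpl. f_equal. induction k; simpl; auto. rewrite IHk. ring.
Qed.

Lemma boxes3 (G : list nat -> R) N :
  lsumR (map G (boxes 3 N)) = fsum N (fun i => fsum N (fun j => fsum N (fun k => G [i; j; k]))).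
Proof.
  rewrite lsumR_boxes_S. apply fsum_ext; intros i.
  rewrite lsumR_boxes_S. apply fsum_ext; intros j.
  rewrite lsumR_boxes_S. apply fsum_ext; intros k.
  unfold lsumR; simpl. lra.
Qed.

Lemma fsum_if N (c : bool) X : fsum N (fun k => if c then X k else 0) = if c then fsum N X else 0.
Proof. destruct c; auto. apply fsum_zero. auto. Qed.

Lemma lub_cond (cond : nat -> bool) (A : nat -> R) L N0 :
  0 <= L -> (forall N, (N0 <= N)%nat -> cond N = true) ->
  (forall N, A N <= L) -> (forall N, L - (/ 2) ^ N <= A N) ->
  is_lub (fun r => exists N, r = if cond N then A N else 0) L.
Proof.
  intros HL Hc H1 H2. apply (lub_approx (fun N => if cond N then A N else 0)).
  - intros N. destruct (cond N); auto.
  - intros eps He. destruct (pow_lt_1_zero (/ 2) ltac:(rewrite Rabs_pos_eq; lra) eps He) as [N1 HN1].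
    exists (Nat.max N0 N1). rewrite Hc by lia.
    specialize (HN1 (Nat.max N0 N1) ltac:(lia)). rewrite Rabs_pos_eq in HN1.
    + specialize (H2 (Nat.max N0 N1)). lra.
    + apply pow_le. lra.
Qed.

Section Main.
Variable M : PTM.

Definition gsL : list pfun := [delta (fun l => l@0); delta (fun l => l@1); Geo2].

Lemma PTC_bounds a b w N :
  let A := fsum N (fun k => (/ 2) ^ S k * (if Nat.eqb w (Fout M a b k) then 1 else 0)) in
  0 <= PTC M [a; b] w /\ A <= PTC M [a; b] w /\ PTC M [a; b] w - (/ 2) ^ N <= A.
Proof.
  intros A. unfold A. clear A.
  assert (Hg : 0 <= (/ 2) ^ N) by (apply pow_le; lra).
  unfold PTC; simpl. unfold PT0, PT1, PT0_from, PT1_from.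
  destruct (isLeaf M a b) eqn:HL.
  - destruct (PT_ratio M a b HL) as [Er Hq]. rewrite Er.
    assert (Hlf : lf M a b = 1%nat) by (rewrite lf_spec, HL; auto).
    destruct (Nat.eq_dec (Qd M a b) 1) as [Q1|Q2].
    + assert (EF : forall k, Fout M a b k = 0%nat).
      { intros k. unfold Fout. rewrite Hlf, Q1. reflexivity. }
      rewrite Q1. simpl INR. rewrite Rinv_1.
      destruct w as [|[|w]].
      * rewrite (fsum_ext _ _ (fun k => (/ 2) ^ S k)) by (intros k; rewrite EF; simpl; lra).
        rewrite geo_sum. lra.
      * rewrite fsum_zero by (intros k; rewrite EF; simpl; lra). lra.
      * rewrite fsum_zero by (intros k; rewrite EF; simpl; lra). lra.
    + set (q := Qd M a b) in *.
      assert (Hq2 : (2 <= q)%nat) by lia.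
      assert (EF : forall k, Fout M a b k = (1 - dig q k)%nat).
      { intros k. unfold Fout. rewrite Hlf. fold q. simpl.
        destruct (q - 1)%nat eqn:Eq; [lia|]. simpl.
        rewrite modr_eq, divr_eq by lia. reflexivity. }
      assert (Hqr : 0 < / INR q) by (apply Rinv_0_lt_compat, lt_0_INR; lia).
      assert (Hqr1 : / INR q <= / 2).
      { apply Rinv_le_contravar. lra. replace 2 with (INR 2) by (simpl; lra). apply le_INR; auto. }
      destruct (dig_bounds q N ltac:(lia)) as [B1 B2].
      pose proof (dig_sum q N Hq2) as DS.
      destruct w as [|[|w]].
      * rewrite (fsum_ext _ _ (fun k => (/ 2) ^ S k * INR (dig q k))).
        -- rewrite DS. lra.
        -- intros k. rewrite EF. pose proof (dig_le q k).
           destruct (dig q k) as [|[|]]; simpl; try lia; lra.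
      * rewrite (fsum_ext _ _ (fun k => (/ 2) ^ S k - (/ 2) ^ S k * INR (dig q k))).
        -- rewrite fsum_minus, geo_sum, DS. lra.
        -- intros k. rewrite EF. pose proof (dig_le q k).
           destruct (dig q k) as [|[|]]; simpl; try lia; lra.
      * rewrite fsum_zero. lra.
        intros k. rewrite EF. pose proof (dig_le q k).
        destruct (dig q k) as [|[|]]; simpl; try lia; lra.
  - assert (Hlf : lf M a b = 0%nat) by (rewrite lf_spec, HL; auto).
    assert (EF : forall k, Fout M a b k = 1%nat) by (intros k; unfold Fout; rewrite Hlf; auto).
    destruct w as [|[|w]].
    + rewrite fsum_zero by (intros k; rewrite EF; simpl; lra). lra.
    + rewrite (fsum_ext _ _ (fun k => (/ 2) ^ S k)) by (intros k; rewrite EF; simpl; lra).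
      rewrite geo_sum. lra.
    + rewrite fsum_zero by (intros k; rewrite EF; simpl; lra). lra.
Qed.

Lemma PR_PTC : PR 2 (PTC M).
Proof.
  apply (PR_comp 2 3 (delta (FoutL M)) gsL (PTC M) (DPR_FoutL M)); auto.
  - intros g Hg. simpl in Hg. destruct Hg as [<-|[<-|[<-|[]]]].
    + apply DPR_proj; lia.
    + apply DPR_proj; lia.
    + apply PR_Geo2.
  - intros x Hx w. destruct x as [|a [|b [|]]]; try discriminate.
    unfold SumVec.
    set (A := fsum (S (Nat.max a b)) (fun _ => 0)). clear A.
    assert (E : forall N, lsumR (map (fun z => delta (FoutL M) z w * prodcomp gsL [a; b] z) (boxes 3 N))
      = if andb (a <? N)%nat (b <? N)%nat then
          fsum N (fun k => (/ 2) ^ S k * (if Nat.eqb w (Fout M a b k) then 1 else 0)) else 0).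
    { intros N. rewrite boxes3.
      rewrite (fsum_ext _ _ (fun i => if (i =? a)%nat then (if (b <? N)%nat then
          fsum N (fun k => (/ 2) ^ S k * (if Nat.eqb w (Fout M a b k) then 1 else 0)) else 0) else 0)).
      - rewrite (fsum_point _ a) by (intros j Hj; rewrite (proj2 (Nat.eqb_neq j a) Hj); auto).
        rewrite Nat.eqb_refl. destruct (a <? N)%nat; auto.
      - intros i.
        rewrite (fsum_ext _ _ (fun j => if andb (i =? a)%nat (j =? b)%nat then
          fsum N (fun k => (/ 2) ^ S k * (if Nat.eqb w (Fout M a b k) then 1 else 0)) else 0)).
        + destruct (i =? a)%nat; simpl.
          * rewrite (fsum_point _ b) by (intros j Hj; rewrite (proj2 (Nat.eqb_neq j b) Hj); auto).
            rewrite Nat.eqb_refl. auto.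
          * apply fsum_zero; auto.
        + intros j. rewrite <- fsum_if. apply fsum_ext. intros k.
          unfold prodcomp, gsL, delta, FoutL. simpl. rewrite Geo2_eq.
          destruct (i =? a)%nat eqn:Ei; destruct (j =? b)%nat eqn:Ej; simpl;
            rewrite ?Nat.eqb_eq in Ei; rewrite ?Nat.eqb_eq in Ej; subst; try lra. }
    destruct (PTC_bounds a b w) with (N := 0%nat) as [H0 _].
    match goal with |- is_lub ?S0 _ => replace S0 with
      (fun r => exists N, r = (fun N => if andb (a <? N)%nat (b <? N)%nat then
          fsum N (fun k => (/ 2) ^ S k * (if Nat.eqb w (Fout M a b k) then 1 else 0)) else 0) N) end.
    2:{ apply functional_extensionality. intros r. apply propositional_extensionality.
        split; intros [N HN]; exists N; rewrite E in *; auto. }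
    apply (lub_cond (fun N => andb (a <? N)%nat (b <? N)%nat)
        (fun N => fsum N (fun k => (/ 2) ^ S k * (if Nat.eqb w (Fout M a b k) then 1 else 0)))
        _ (S (Nat.max a b))); auto.
    + intros N HN. rewrite (proj2 (Nat.ltb_lt a N)), (proj2 (Nat.ltb_lt b N)) by lia. auto.
    + intros N. apply (PTC_bounds a b w N).
    + intros N. apply (PTC_bounds a b w N).
Qed.

Theorem main : IsMu 1 (PTC M) (CF M) /\ PR 1 (CF M).
Proof.
  split. apply mu_part. apply (PR_mu 1 (PTC M) (CF M) PR_PTC (mu_part M)).
Qed.
End Main.


Theorem mainTheorem11 (M : PTM) :
  IsMu 1 (PTC M) (CF M) /\ PR 1 (CF M).
Proof.
  exact (main M).
Qed.
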